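(* For any $i\in[n]$, the number of classical parking functions $p\in\mathrm{PF}_n$ whose classical outcome is $\mathrm{Inc}_i^n:=i(i+1)\cdots n\,12\cdots(i-1)$ equals $(n+1-i)!\,(i-1)!$.
   Context: $[n]=\{1,\dots,n\}$; permutations of $[n]$ are written in one-line notation. A parking preference is $p=(p_1,\dots,p_n)\in[n]^n$. Classical parking process: cars $1,\dots,n$ enter in order into spots $1,\dots,n$, initially unoccupied; car $i$ parks in the first unoccupied spot $k\ge p_i$ and fails if there is none. $\mathrm{PF}_n$ is the set of $p$ for which all cars park; the classical outcome of $p$ is the permutation $\pi$ with $\pi_k$ the car in spot $k$ at the end. *)

(* Defs.v *)
From mathcomp Require Import all_boot.
Set Implicit Arguments. Unset Strict Implicit. Unset Printing Implicit Defensive.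

(* Convention: spots and preferences are 1-based as in the paper.
   A parking preference p in [n]^n is a finite function 'I_n -> 'I_n,
   where car c+1 has preference (p c)+1 (0-based ordinal shift). *)

(* State of the lot: a sequence of length n, entry k (0-based, i.e. spot k+1)
   is Some car (1-based car label) or None (unoccupied). *)

Definition first_free (st : seq (option nat)) (q : nat) : option nat :=
  let k := find (fun j => (q <= j) && (nth (Some 0) st j == None)) (iota 0 (size st)) in
  if k < size st then Some k else None.

(* Car `car` (1-based label) with 0-based preference q enters. *)
Definition park_step (st : option (seq (option nat))) (cq : nat * nat)
  : option (seq (option nat)) :=
  match st with
  | None => None
  | Some s => match first_free s cq.2 with
              | None => None
              | Some k => Some (set_nth None s k (Some cq.1))
              end
  end.

Definition park_run (n : nat) (p : {ffun 'I_n -> 'I_n}) : option (seq (option nat)) :=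
  foldl park_step (Some (nseq n None))
        [seq ((val c).+1, val (p c)) | c <- enum 'I_n].

Definition is_PF (n : nat) (p : {ffun 'I_n -> 'I_n}) : bool := park_run p != None.

Definition outcome (n : nat) (p : {ffun 'I_n -> 'I_n}) : seq nat :=
  match park_run p with
  | Some s => map (odflt 0) s
  | None => [::]
  end.

Definition Inc (n i : nat) : seq nat := iota i (n.+1 - i) ++ iota 1 (i.-1).

(* Main.v *)
Require Import Defs.
From mathcomp Require Import all_boot.
From mathcomp Require Import zify.
Set Implicit Arguments. Unset Strict Implicit. Unset Printing Implicit Defensive.

Lemma find_iota_spec (P : pred nat) n j : j < n -> P j ->
  (forall j', j' < j -> ~~ P j') -> find P (iota 0 n) = j.
Proof.
move=> jn Pj H.
have hasP : has P (iota 0 n) by apply/hasP; exists j; rewrite ?mem_iota.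
have kn : find P (iota 0 n) < n by move: hasP; rewrite has_find size_iota.
have := nth_find 0 hasP; rewrite nth_iota // add0n => Pk.
case: (ltngtP (find P (iota 0 n)) j) => // [kj|jk].
  by move: (H _ kj); rewrite Pk.
by have := before_find 0 jk; rewrite nth_iota // add0n Pj.
Qed.

Lemma first_freeP s q j : first_free s q = Some j ->
  [/\ j < size s, q <= j, nth (Some 0) s j == None &
   forall j', j' < j -> ~~ ((q <= j') && (nth (Some 0) s j' == None))].
Proof.
rewrite /first_free; set P := (fun j => _).
case: ifP => // hk [<-].
have hasP : has P (iota 0 (size s)) by rewrite has_find size_iota.
have := nth_find 0 hasP; rewrite nth_iota // add0n => /andP[h1 h2].
split => // j' hj'.
have hj's : j' < size s by apply: ltn_trans hk.
move: (before_find 0 hj'); rewrite nth_iota // add0n. by rewrite /P => ->.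
Qed.

Lemma first_free_eq s q j : j < size s -> q <= j -> nth (Some 0) s j == None ->
   (forall j', j' < j -> ~~ ((q <= j') && (nth (Some 0) s j' == None))) ->
   first_free s q = Some j.
Proof.
move=> js qj hj H; rewrite /first_free (@find_iota_spec _ _ j) //; first by rewrite js.
by rewrite qj.
Qed.

Lemma park_step_pres s cq s' : park_step (Some s) cq = Some s' ->
  size s' = size s /\ forall j, nth None s j != None -> nth None s' j = nth None s j.
Proof.
rewrite /=; case E: first_free => [k|//] [<-].
have [ks _ hk _] := first_freeP E.
split; first by rewrite size_set_nth; apply/maxn_idPr.
move=> j hj; rewrite nth_set_nth /=; case: eqP => // ejk; subst j.
by move: hk hj; rewrite (set_nth_default None) // => /eqP ->.
Qed.

Definition gs a b := iota b.+1 a ++ iota 1 b.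
Definition tt (a b k : nat) := if k < b then a + k else k - b.
Definition lo (a b k : nat) := if k < b then a else 0.
Definition ok a b k q := (lo a b k <= q) && (q <= tt a b k).
Definition st a b k := map (fun x => if x <= k then Some x else None) (gs a b).

Lemma size_gs a b : size (gs a b) = a + b.
Proof. by rewrite size_cat !size_iota. Qed.

Lemma nth_gs a b j : nth 0 (gs a b) j =
  if j < a then b.+1 + j else if j < a + b then (j - a).+1 else 0.
Proof.
rewrite nth_cat size_iota; case: ifP => ja; first by rewrite nth_iota.
case: ifP => jab; first by rewrite nth_iota; lia.
by rewrite nth_default // size_iota; lia.
Qed.

Lemma st_nth a b k j : j < a + b ->
  nth (Some 0) (st a b k) j = if nth 0 (gs a b) j <= k then Some (nth 0 (gs a b) j) else None.
Proof. by move=> hj; rewrite (nth_map 0) // size_gs. Qed.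

Lemma st_nthN a b k j : j < a + b ->
  nth None (st a b k) j = if nth 0 (gs a b) j <= k then Some (nth 0 (gs a b) j) else None.
Proof. by move=> hj; rewrite (nth_map 0) // size_gs. Qed.

Lemma size_st a b k : size (st a b k) = a + b.
Proof. by rewrite size_map size_gs. Qed.

Lemma G3 a b k : k < a + b -> tt a b k < a + b /\ nth 0 (gs a b) (tt a b k) = k.+1.
Proof. rewrite /tt nth_gs; case: ifP => kb; repeat case: ifP; lia. Qed.

Lemma G4 a b k j : j < a + b -> nth 0 (gs a b) j = k.+1 -> j = tt a b k.
Proof. rewrite /tt nth_gs; case: ifP => kb; repeat case: ifP; lia. Qed.

Lemma G5 a b k j : k < a + b -> lo a b k <= j -> j < tt a b k -> nth 0 (gs a b) j <= k.
Proof. rewrite /tt /lo nth_gs; case: ifP => kb; repeat case: ifP; lia. Qed.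

Lemma G6 a b k j : 0 < a -> k < a + b -> j < lo a b k -> k < nth 0 (gs a b) j.
Proof. rewrite /tt /lo nth_gs; case: ifP => kb; repeat case: ifP; lia. Qed.

Lemma G1 a b j : j < a + b -> 0 < nth 0 (gs a b) j <= a + b.
Proof. rewrite nth_gs; repeat case: ifP; lia. Qed.

Lemma lo_tt a b k : lo a b k <= tt a b k.
Proof. rewrite /lo /tt; case: ifP; lia. Qed.

Lemma step_good a b k q : 0 < a -> k < a + b -> ok a b k q ->
  park_step (Some (st a b k)) (k.+1, q) = Some (st a b k.+1).
Proof.
move=> a0 kn /andP[lq qt]; have [tn gt] := G3 kn.
rewrite /park_step /= (@first_free_eq _ _ (tt a b k)) //; first last.
- move=> j' hj'; apply/negP => /andP[qj /eqP].
  rewrite st_nth; last by apply: ltn_trans tn.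
  by rewrite (G5 kn) //; apply: leq_trans qj.
- by rewrite st_nth // gt ltnn.
- by rewrite size_st.
congr Some; apply: (@eq_from_nth _ None).
  by rewrite size_set_nth !size_st (maxn_idPr tn).
move=> j; rewrite size_set_nth size_st (maxn_idPr tn) => hj.
rewrite nth_set_nth /= st_nthN //; case: eqP => [->|ne]; last rewrite st_nthN //.
  by rewrite st_nthN // gt leqnn.
case: (ltngtP (nth 0 (gs a b) j) k.+1) => h; try by case: ifP => //; lia.
by case: ne; apply: G4.
Qed.

Lemma step_bad a b k q : 0 < a -> k < a + b -> ~~ ok a b k q ->
  park_step (Some (st a b k)) (k.+1, q) = None \/
  exists j, [/\ j < a + b, j != tt a b k &
     park_step (Some (st a b k)) (k.+1, q) = Some (set_nth None (st a b k) j (Some k.+1))].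
Proof.
move=> a0 kn nok; rewrite /=; case E: first_free => [j|]; [right|by left].
exists j; have [js qj hj H] := first_freeP E; rewrite size_st in js.
split => //; apply/eqP => ejt; subst j.
move/negP: nok; apply; rewrite /ok qj andbT leqNgt; apply/negP => qlo.
have qt : q < tt a b k by apply: leq_trans qlo (lo_tt a b k).
have := H q qt; rewrite leqnn /= st_nth; last by apply: ltn_trans js.
by rewrite leqNgt (G6 a0 kn qlo).
Qed.

Definition R n (pf : nat -> nat) k :=
  foldl park_step (Some (nseq n None)) [seq (c.+1, pf c) | c <- iota 0 k].

Lemma R_S n pf k : R n pf k.+1 = park_step (R n pf k) (k.+1, pf k).
Proof. by rewrite /R -{1}addn1 iotaD map_cat foldl_cat. Qed.

Lemma st0 a b : st a b 0 = nseq (a + b) None.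
Proof.
apply: (@eq_from_nth _ None); first by rewrite size_st size_nseq.
move=> j; rewrite size_st => hj; rewrite st_nthN // nth_nseq hj.
by have := G1 hj; case: ifP => //; lia.
Qed.

Lemma run_good a b pf : 0 < a -> forall k, k <= a + b ->
  (forall c, c < k -> ok a b c (pf c)) -> R (a + b) pf k = Some (st a b k).
Proof.
move=> a0; elim=> [|k IH] hk H; first by rewrite /R /= st0.
rewrite R_S IH; [|lia|by move=> c hc; apply: H; lia].
by apply: step_good => //; apply: H.
Qed.

Lemma run_bad a b pf c : 0 < a -> c < a + b -> ~~ ok a b c (pf c) ->
  (forall c', c' < c -> ok a b c' (pf c')) -> forall m,
  R (a + b) pf (c.+1 + m) = None \/ exists s, R (a + b) pf (c.+1 + m) = Some s /\
   size s = a + b /\ exists j, [/\ j < a + b, j != tt a b c & nth None s j = Some c.+1].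
Proof.
move=> a0 cn nok H; elim=> [|m IH].
  rewrite addn0 R_S (run_good a0 (ltnW cn) H).
  case: (step_bad a0 cn nok) => [->|[j [jn jt ->]]]; [by left|right].
  eexists; split; first by [].
  split; first by rewrite size_set_nth size_st; apply/maxn_idPr.
  by exists j; split => //; rewrite nth_set_nth /= eqxx.
rewrite addnS R_S; case: IH => [->|[s [-> [ss [j [jn jt hj]]]]]]; first by left.
case E: park_step => [s'|]; last by left.
right; exists s'; split => //; have [ss' Hs] := park_step_pres E.
split; first by rewrite ss' ss.
by exists j; split => //; rewrite Hs hj.
Qed.

Definition outR (r : option (seq (option nat))) :=
  match r with Some s => map (odflt 0) s | None => [::] end.

Lemma charac a b pf : 0 < a ->
  (R (a + b) pf (a + b) != None) && (outR (R (a + b) pf (a + b)) == gs a b) =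
  all (fun c => ok a b c (pf c)) (iota 0 (a + b)).
Proof.
move=> a0; apply/idP/idP.
  move=> /andP[hP /eqP hO]; apply/allP => c; rewrite mem_iota add0n => /andP[_].
  suff: forall m, m <= a + b -> forall c, c < m -> ok a b c (pf c) by move=> /(_ (a + b) (leqnn _)); apply.
  elim=> [|m IH] hm // c' hc'.
  have Hm : forall c, c < m -> ok a b c (pf c) by apply: IH; lia.
  case: (ltngtP c' m) => [/Hm //||->]; first lia.
  apply/negPn/negP => nok.
  have := run_bad a0 hm nok Hm (a + b - m.+1).
  have -> : m.+1 + (a + b - m.+1) = a + b by lia.
  case=> [E|[s [E [ss [j [jn jt hj]]]]]]; first by rewrite E in hP.
  move: hO; rewrite E /= => hO.
  have : nth 0 (map (odflt 0) s) j = m.+1 by rewrite (nth_map None) ?ss // hj.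
  by rewrite hO => /(G4 jn) /eqP; rewrite (negbTE jt).
move=> /allP H.
rewrite (run_good a0 (leqnn _)); last by move=> c hc; apply: H; rewrite mem_iota.
rewrite /=; apply/eqP; apply: (@eq_from_nth _ 0); first by rewrite size_map size_st size_gs.
move=> j; rewrite size_map size_st => hj.
rewrite (nth_map None) ?size_st // st_nthN //.
by have := G1 hj; case: ifP => //; lia.
Qed.

Lemma cnt n (P : pred nat) : #|[pred q : 'I_n | P (val q)]| = count P (iota 0 n).
Proof.
by rewrite -val_enum_ord count_map -size_filter enumT -cardE.
Qed.
Lemma cnt2 n l t : l <= t -> t < n -> count (fun q => (l <= q) && (q <= t)) (iota 0 n) = t.+1 - l.
Proof.
move=> lt tn.
have -> : n = l + ((t.+1 - l) + (n - t.+1)) by lia.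
rewrite !iotaD !count_cat add0n.
rewrite (eq_in_count (s := iota 0 l) (a2 := pred0)); last by move=> x; rewrite mem_iota /= => hx; lia.
rewrite (eq_in_count (s := iota l _) (a2 := predT)); last by move=> x; rewrite mem_iota /= => hx; lia.
rewrite (eq_in_count (s := iota (l + _) _) (a2 := pred0)); last by move=> x; rewrite mem_iota /= => hx; lia.
by rewrite !count_pred0 count_predT size_iota addn0 add0n.
Qed.
Lemma prodF a b (F : nat -> nat) : (forall c, c < b -> F c = c.+1) -> (forall c, b <= c < a + b -> F c = (c - b).+1) ->
  \prod_(c < a + b) F c = a`! * b`!.
Proof.
move=> H1 H2.
rewrite -(big_mkord xpredT) (big_cat_nat _ (n := b)) //=; last lia.
rewrite mulnC; congr (_ * _).
  rewrite -{1}(add0n b) big_addn addnK (eq_big_nat _ _ (F2 := fun i => i.+1)); last by move=> i hi; rewrite H2; lia.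
  by rewrite fact_prod big_add1.
rewrite (eq_big_nat _ _ (F2 := fun i => i.+1)); last by move=> i hi; rewrite H1; lia.
by rewrite fact_prod big_add1.
Qed.
Lemma fam n (F : 'I_n -> pred 'I_n) : #|family F| = \prod_(c < n) #|F c|.
Proof. by rewrite card_family foldrE big_map big_enum. Qed.

Theorem proposition3p1 (n i : nat) (hi1 : 1 <= i) (hin : i <= n) :
  #|[set p : {ffun 'I_n -> 'I_n} | is_PF p && (outcome p == Inc n i)]|
  = ((n.+1 - i)`! * (i.-1)`!)%N.
Proof.
have a0 : 0 < n.+1 - i by lia.
have hn : n = (n.+1 - i) + i.-1 by lia.
have hI : Inc n i = gs (n.+1 - i) i.-1 by rewrite /Inc /gs prednK.
move: (n.+1 - i) (i.-1) hn hI a0 => a b hn hI a0.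
pose F : 'I_n -> pred 'I_n := fun c => [pred q : 'I_n | ok a b c (val q)].
transitivity #|family F|.
  apply: eq_card => p; rewrite inE hI.
  pose pf k := oapp (fun c => val (p c)) 0 (insub k).
  have hL : [seq ((val c).+1, val (p c)) | c <- enum 'I_n] = [seq (k.+1, pf k) | k <- iota 0 n].
    by rewrite -val_enum_ord -map_comp; apply: eq_map => c /=; rewrite /pf valK.
  have -> : is_PF p = (R n pf n != None) by rewrite /is_PF /park_run hL.
  have -> : outcome p = outR (R n pf n) by rewrite /outcome /park_run hL.
  have := charac b pf a0; rewrite -hn => ->.
  apply/allP/familyP.
    move=> H c; rewrite inE /=; have := H (val c); rewrite mem_iota /= /pf valK /=.
    by apply; rewrite ltn_ord.
  move=> H k; rewrite mem_iota /= => hk; rewrite /pf insubT /=.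
  by have := H (Ordinal hk).
rewrite fam.
rewrite (eq_bigr (fun c : 'I_n => (tt a b c).+1 - lo a b c)); last first.
  move=> c _; rewrite /F cnt cnt2 //; first exact: lo_tt.
  by have [] := G3 (k := val c) (a := a) (b := b); rewrite -?hn ?ltn_ord.
have -> : \prod_(c < n) ((tt a b c).+1 - lo a b c) =
  \prod_(c < a + b) ((tt a b c).+1 - lo a b c) by rewrite -hn.
apply: (prodF (F := fun c => (tt a b c).+1 - lo a b c)) => c hc; rewrite /tt /lo; case: ifP; lia.
Qed.
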